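(* Let $\phi=\frac{1+\sqrt5}{2}$ be the golden ratio. For every $\epsilon>0$ there exists a (weighted) instance of the atomic two-stage facility location game that admits no $(\phi-\epsilon)$-approximate subgame perfect equilibrium.
   Context: Atomic two-stage facility location game. An instance is a triple $(H,U,k)$: $H=(V,E,w)$ is a finite directed graph with vertex weights $w:V\to\mathbb{Q}_{>0}$; $F$ is a set of $k$ facility agents; $U:F\to 2^V$ assigns to each facility agent $f$ a set $U(f)\subseteq V$ of feasible locations. The vertices are simultaneously the clients and the possible locations. A facility placement profile (FPP) is a vector $\mathbf{s}=(s_f)_{f\in F}$ with $s_f\in U(f)$ (several facilities may choose the same vertex); $S$ denotes the set of all FPPs. For a client $v$ let $N(v)=\{v\}\cup\{u:(v,u)\in E\}$ and $N_{\mathbf{s}}(v)=\{f\in F: s_f\in N(v)\}$. A client profile for $\mathbf{s}$ is $\sigma(\mathbf{s})$, assigning to each client $v$ numbers $\sigma(\mathbf{s})_{v,f}\in[0,1]$ ($f\in F$) with $\sigma(\mathbf{s})_{v,f}=0$ for $f\notin N_{\mathbf{s}}(v)$ and $\sum_{f\in N_{\mathbf{s}}(v)}\sigma(\mathbf{s})_{v,f}=1$ whenever $N_{\mathbf{s}}(v)\neq\varnothing$. A full client profile $\sigma$ specifies a client profile $\sigma(\mathbf{s}')$ for every $\mathbf{s}'\in S$. The load of facility $f$ is $\ell_f(\mathbf{s},\sigma)=\sum_{v\in V}\sigma(\mathbf{s})_{v,f}w(v)$. The cost of client $v$ is $L_v(\mathbf{s},\sigma)=w(v)+\sum_{f\in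 N_{\mathbf{s}}(v)}\sigma(\mathbf{s})_{v,f}\,\ell_{-v,f}(\mathbf{s},\sigma)$ where $\ell_{-v,f}(\mathbf{s},\sigma)=\sum_{u\neq v}\sigma(\mathbf{s})_{u,f}w(u)$. $\sigma(\mathbf{s})$ is a client equilibrium if no client $v$ can strictly decrease $L_v$ by unilaterally changing her own distribution to another feasible one; $\sigma$ is a full client equilibrium if $\sigma(\mathbf{s}')$ is a client equilibrium for every $\mathbf{s}'\in S$. For a real number $\alpha$, a pair $(\mathbf{s},\sigma)$ is an $\alpha$-approximate subgame perfect equilibrium if $\sigma$ is a full client equilibrium and there is no facility $f$ and location $s'_f\in U(f)$ with $\ell_f((s'_f,\mathbf{s}_{-f}),\sigma)>\alpha\cdot\ell_f(\mathbf{s},\sigma)$ (the paper considers $\alpha\ge 1$). *)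

(* Defs.v *)
From HB Require Import structures.
From mathcomp Require Import all_boot all_order all_algebra.
From mathcomp Require Import reals.
Set Implicit Arguments. Unset Strict Implicit. Unset Printing Implicit Defensive.
Import Order.TTheory GRing.Theory Num.Theory.
Local Open Scope ring_scope.

(* An instance (H, U, k): vertices 'I_n, directed edge relation E,
   rational vertex weights w, k facility agents 'I_k, feasible sets U. *)
Record fl_instance := FLInstance {
  fl_n : nat;
  fl_E : rel 'I_fl_n;
  fl_w : 'I_fl_n -> rat;
  fl_k : nat;
  fl_U : 'I_fl_k -> {set 'I_fl_n}
}.
Arguments fl_E : clear implicits.
Arguments fl_w : clear implicits.
Arguments fl_U : clear implicits.

Definition valid_instance (I : fl_instance) : Prop :=
  (forall v, 0 < fl_w I v) /\ (forall f, fl_U I f != set0).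

Section Game.
Variables (R : realType) (I : fl_instance).
Local Notation V := ('I_(fl_n I)).
Local Notation F := ('I_(fl_k I)).
Local Notation w := (fun v : V => (ratr (fl_w I v) : R)).

Definition FPP := {ffun F -> V}.

Definition is_FPP (s : FPP) : Prop := forall f, s f \in fl_U I f.

Definition Nb (v : V) : {set V} := [set u | (u == v) || fl_E I v u].

Definition Ns (s : FPP) (v : V) : {set F} := [set f | s f \in Nb v].

Definition cprofile := V -> F -> R.

Definition feasible_dist (s : FPP) (v : V) (tau : F -> R) : Prop :=
  (forall f, 0 <= tau f <= 1) /\
  (forall f, f \notin Ns s v -> tau f = 0) /\
  (Ns s v != set0 -> \sum_(f in Ns s v) tau f = 1).

Definition is_cprofile (s : FPP) (sg : cprofile) : Prop :=
  forall v, feasible_dist s v (sg v).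

Definition load (sg : cprofile) (f : F) : R :=
  \sum_(v : V) sg v f * w v.

Definition load_minus (sg : cprofile) (v : V) (f : F) : R :=
  \sum_(u : V | u != v) sg u f * w u.

Definition client_cost (s : FPP) (sg : cprofile) (v : V) : R :=
  w v + \sum_(f in Ns s v) sg v f * load_minus sg v f.

Definition upd (sg : cprofile) (v : V) (tau : F -> R) : cprofile :=
  fun u f => if u == v then tau f else sg u f.

Definition client_eq (s : FPP) (sg : cprofile) : Prop :=
  is_cprofile s sg /\
  forall v tau, feasible_dist s v tau ->
    ~ (client_cost s (upd sg v tau) v < client_cost s sg v).

Definition full_cprofile := FPP -> cprofile.

Definition full_client_eq (sg : full_cprofile) : Prop :=
  forall s', is_FPP s' -> client_eq s' (sg s').

Definition deviate (s : FPP) (f : F) (x : V) : FPP :=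
  [ffun g => if g == f then x else s g].

Definition approx_SPE (alpha : R) (s : FPP) (sg : full_cprofile) : Prop :=
  is_FPP s /\ full_client_eq sg /\
  ~ (exists f, exists2 x, x \in fl_U I f &
       load (sg (deviate s f x)) f > alpha * load (sg s) f).

End Game.

Definition golden_ratio (R : realType) : R := (1 + Num.sqrt 5) / 2.

(* Main.v *)
Require Import Defs.
From HB Require Import structures.
From mathcomp Require Import all_boot all_order all_algebra.
From mathcomp Require Import reals.
From mathcomp Require Import ring lra.
Import Order.TTheory GRing.Theory Num.Theory.
Local Open Scope ring_scope.

Section Inst.
Variables (x h : rat).

Definition myE : rel 'I_5 := fun v u =>
  [|| (val v == 0%N) && (val u == 1%N), (val v == 1%N) && (val u == 2%N),
      (val v == 4%N) && (val u == 0%N) | (val v == 4%N) && (val u == 3%N)].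
Definition myw (v : 'I_5) : rat :=
  match val v with 0 => x | 1 => 1 + h | 2 => x + h | 3 => x - 1 | _ => 1 end.
Definition myU (f : 'I_2) : {set 'I_5} :=
  [set v : 'I_5 | if val f == 0%N then (val v == 0%N) || (val v == 2%N)
                  else (val v == 1%N) || (val v == 3%N)].
Definition myI : fl_instance := @FLInstance 5 myE myw 2 myU.
End Inst.

Definition v0 : 'I_5 := @Ordinal 5 0 isT.
Definition v1 : 'I_5 := @Ordinal 5 1 isT.
Definition v2 : 'I_5 := @Ordinal 5 2 isT.
Definition v3 : 'I_5 := @Ordinal 5 3 isT.
Definition v4 : 'I_5 := @Ordinal 5 4 isT.
Definition f0 : 'I_2 := @Ordinal 2 0 isT.
Definition f1 : 'I_2 := @Ordinal 2 1 isT.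

Lemma sum5 (R : realType) (F : 'I_5 -> R) :
  \sum_(v < 5) F v = F v0 + F v1 + F v2 + F v3 + F v4.
Proof.
have E : forall i j : 'I_5, val i = val j -> F i = F j by move=> i j /val_inj ->.
rewrite !big_ord_recr big_ord0 /= add0r.
by congr (_ + _ + _ + _ + _); apply: E.
Qed.

Lemma fac2 (f : 'I_2) : f = f0 \/ f = f1.
Proof.
case: f => [[|[|m]] p]; [left|right|by []]; exact: val_inj.
Qed.

Section Gen.
Variables (R : realType) (x h : rat).
Local Notation I := (myI x h).

Lemma zeroN (s : FPP I) (sg : cprofile R I) v g :
  is_cprofile s sg -> g \notin Ns s v -> sg v g = 0.
Proof. by move=> /(_ v) [_ [H _]] /H. Qed.

Lemma oneN (s : FPP I) (sg : cprofile R I) v f :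
  is_cprofile s sg -> f \in Ns s v -> (forall g, g != f -> g \notin Ns s v) ->
  sg v f = 1.
Proof.
move=> /(_ v) [_ [H0 H1]] fin Hg.
have ne : Ns s v != set0 by apply/set0Pn; exists f.
rewrite -(H1 ne) (bigD1 f) //= big1 ?addr0 // => g /andP [gin gf].
by move: (Hg g gf); rewrite gin.
Qed.

Lemma lm_upd (sg : cprofile R I) v tau g :
  load_minus (upd sg v tau) v g = load_minus sg v g.
Proof.
by apply: eq_bigr => u uv; rewrite /upd (negbTE uv).
Qed.

Lemma sharedN (s : FPP I) (sg : cprofile R I) v f g :
  client_eq s sg -> (forall j, j \in Ns s v) ->
  load_minus sg v g < load_minus sg v f -> sg v f = 0.
Proof.
move=> [cp ceq] allin lt.
have fg : f != g by apply/eqP => E; move: lt; rewrite E ltxx.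
have two : forall j, j = f \/ j = g.
  move=> j; case: (fac2 j) => ->; case: (fac2 f) => Ef; case: (fac2 g) => Eg;
  rewrite ?Ef ?Eg in fg *; by [left | right | rewrite eqxx in fg].
pose tau := fun j : 'I_2 => if j == g then (1 : R) else 0.
have sumtau : forall G : 'I_2 -> R, \sum_(j in Ns s v) tau j * G j = G g.
  move=> G; rewrite (bigD1 g) //= /tau eqxx mul1r big1 ?addr0 //.
  by move=> j /andP [_ /negbTE ->]; rewrite mul0r.
have feas : feasible_dist s v tau.
  split; first by move=> j; rewrite /tau; case: (j == g); rewrite ?lexx ?ler01.
  split; first by move=> j; rewrite allin.
  move=> _; have := sumtau (fun _ => 1); under eq_bigr do rewrite mulr1.
  by move=> ->.
have := ceq v tau feas.
rewrite /client_cost.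
under eq_bigr do rewrite lm_upd /upd eqxx.
rewrite sumtau.
have [H01 [_ Hs]] := cp v.
have ne : Ns s v != set0 by apply/set0Pn; exists f.
have S1 := Hs ne.
have rest : forall G : 'I_2 -> R, \sum_(j in Ns s v) sg v j * G j =
    sg v f * G f + sg v g * G g.
  move=> G; rewrite (bigD1 f) //= (bigD1 g) /=; last by rewrite allin eq_sym.
  rewrite big1 ?addr0 ?addrA // => j /andP [/andP [_ jf] jg].
  by case: (two j) => E; rewrite E eqxx ?andbF in jf jg.
rewrite rest.
move: (rest (fun _ => 1)); under eq_bigr do rewrite mulr1.
rewrite S1 !mulr1 => S2.
have [/andP [g0 _] /andP [f0' _]] := (H01 g, H01 f).
move=> nlt; apply/eqP; move: f0'; rewrite le_eqVlt => /orP [/eqP <- //|pos].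
exfalso; apply: nlt.
nra.
Qed.
End Gen.

Section St.
Variables (R : realType) (x h : rat).
Local Notation I := (myI x h).

Lemma memNs (s : FPP I) f v :
  (f \in Ns s v) = (val (s f) == val v) || myE v (s f).
Proof. by rewrite !inE val_eqE. Qed.

Lemma loadE (sg : cprofile R I) f :
  load sg f = sg v0 f * ratr x + sg v1 f * ratr (1 + h) + sg v2 f * ratr (x + h)
            + sg v3 f * ratr (x - 1) + sg v4 f * ratr 1.
Proof. by rewrite /load sum5. Qed.

Lemma lmE (sg : cprofile R I) f v :
  load_minus sg v f = 
   (if v0 != v then sg v0 f * ratr x else 0) + (if v1 != v then sg v1 f * ratr (1 + h) else 0)
   + (if v2 != v then sg v2 f * ratr (x + h) else 0)
   + (if v3 != v then sg v3 f * ratr (x - 1) else 0) + (if v4 != v then sg v4 f * ratr 1 else 0).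
Proof. by rewrite /load_minus big_mkcond sum5. Qed.


Lemma complN (s : FPP I) (sg : cprofile R I) v f g :
  is_cprofile s sg -> f \in Ns s v -> g \in Ns s v -> f != g ->
  sg v f = 0 -> sg v g = 1.
Proof.
move=> cp fin gin fg a.
have [_ [_ S]] := cp v.
have ne : Ns s v != set0 by apply/set0Pn; exists f.
move: (S ne); rewrite (bigD1 f) //= (bigD1 g) /=; last by rewrite gin eq_sym.
rewrite big1 ?addr0 ?a ?add0r //.
move=> j /andP [/andP [_ jf] jg].
case: (fac2 j) => E; case: (fac2 f) => Ef; case: (fac2 g) => Eg;
  rewrite ?E ?Ef ?Eg ?eqxx ?andbF in jf jg fg *; by [].
Qed.

Lemma st01 (s : FPP I) (sg : cprofile R I) :
  0 < h -> client_eq s sg -> val (s f0) = 0%N -> val (s f1) = 1%N ->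
  load sg f0 = ratr x + 1 /\ load sg f1 = 1 + ratr h.
Proof.
move=> hp ce hs0 hs1; have cp := ce.1.
have Z := fun v g P => @zeroN R x h s sg v g cp P.
have O := fun v f P Q => @oneN R x h s sg v f cp P Q.
have Fa g : g != f0 -> g = f1 by case: (fac2 g) => ->; rewrite ?eqxx.
have Fb g : g != f1 -> g = f0 by case: (fac2 g) => ->; rewrite ?eqxx.
have a10 : sg v1 f0 = 0 by apply: Z; rewrite memNs /myE hs0.
have a11 : sg v1 f1 = 1 by apply: O; [rewrite memNs /myE hs1 | move=> g /Fb ->; rewrite memNs /myE hs0].
have a20 : sg v2 f0 = 0 by apply: Z; rewrite memNs /myE hs0.
have a21 : sg v2 f1 = 0 by apply: Z; rewrite memNs /myE hs1.
have a30 : sg v3 f0 = 0 by apply: Z; rewrite memNs /myE hs0.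
have a31 : sg v3 f1 = 0 by apply: Z; rewrite memNs /myE hs1.
have a40 : sg v4 f0 = 1 by apply: O; [rewrite memNs /myE hs0 | move=> g /Fa ->; rewrite memNs /myE hs1].
have a41 : sg v4 f1 = 0 by apply: Z; rewrite memNs /myE hs1.
have a01 : sg v0 f1 = 0.
  apply: (@sharedN R x h s sg v0 f1 f0 ce).
    by move=> j; case: (fac2 j) => ->; rewrite memNs /myE ?hs0 ?hs1.
  rewrite !lmE /= a10 a11 a20 a21 a30 a31 a40 a41 !rmorphD !rmorph1 /=.
  have : 0 < ratr h :> R by rewrite ltr0q.
  lra.
have a00 : sg v0 f0 = 1.
  have [_ [_ S]] := cp v0.
  have ne : Ns s v0 != set0 by apply/set0Pn; exists f0; rewrite memNs hs0.
  move: (S ne); rewrite (bigD1 f0) ?memNs ?hs0 //= (bigD1 f1) /=; last by rewrite memNs /myE hs1.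
  rewrite big1 ?addr0 ?a01 ?addr0 //.
  by move=> j /andP [/andP [_ j0] j1]; case: (fac2 j) => E; rewrite E ?eqxx ?andbF in j0 j1.
rewrite !loadE a00 a01 a10 a11 a20 a21 a30 a31 a40 a41 !rmorphD !rmorph1.
split; ring.
Qed.
Lemma st03 (s : FPP I) (sg : cprofile R I) :
  0 < h -> client_eq s sg -> val (s f0) = 0%N -> val (s f1) = 3%N ->
  load sg f0 = ratr x /\ load sg f1 = ratr x.
Proof.
move=> hp ce hs0 hs1; have cp := ce.1.
have Z := fun v g P => @zeroN R x h s sg v g cp P.
have O := fun v f P Q => @oneN R x h s sg v f cp P Q.
have Fa g : g != f0 -> g = f1 by case: (fac2 g) => ->; rewrite ?eqxx.
have Fb g : g != f1 -> g = f0 by case: (fac2 g) => ->; rewrite ?eqxx.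
have hr : 0 < ratr h :> R by rewrite ltr0q.
have a00 : sg v0 f0 = 1 by apply: O; [rewrite memNs /myE hs0 | move=> g /Fa ->; rewrite memNs /myE hs1].
have a01 : sg v0 f1 = 0 by apply: Z; rewrite memNs /myE hs1.
have a10 : sg v1 f0 = 0 by apply: Z; rewrite memNs /myE hs0.
have a11 : sg v1 f1 = 0 by apply: Z; rewrite memNs /myE hs1.
have a20 : sg v2 f0 = 0 by apply: Z; rewrite memNs /myE hs0.
have a21 : sg v2 f1 = 0 by apply: Z; rewrite memNs /myE hs1.
have a30 : sg v3 f0 = 0 by apply: Z; rewrite memNs /myE hs0.
have a31 : sg v3 f1 = 1 by apply: O; [rewrite memNs /myE hs1 | move=> g /Fb ->; rewrite memNs /myE hs0].
have a40 : sg v4 f0 = 0.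
  apply: (@sharedN R x h s sg v4 f0 f1 ce).
    by move=> j; case: (fac2 j) => ->; rewrite memNs /myE ?hs0 ?hs1.
  rewrite !lmE /= a00 a01 a10 a11 a20 a21 a30 a31 !rmorphD !rmorph1 /=; try rewrite !rmorphB !rmorph1 /=.
  lra.
have a41 : sg v4 f1 = 1.
  by apply: (@complN s sg v4 f0 f1 cp) => //; rewrite memNs /myE ?hs0 ?hs1.
rewrite !loadE a00 a01 a10 a11 a20 a21 a30 a31 a40 a41 !rmorphD !rmorph1; try rewrite !rmorphB !rmorph1.
split; ring.
Qed.

Lemma st23 (s : FPP I) (sg : cprofile R I) :
  0 < h -> client_eq s sg -> val (s f0) = 2%N -> val (s f1) = 3%N ->
  load sg f0 = 1 + ratr x + 2 * ratr h /\ load sg f1 = ratr x.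
Proof.
move=> hp ce hs0 hs1; have cp := ce.1.
have Z := fun v g P => @zeroN R x h s sg v g cp P.
have O := fun v f P Q => @oneN R x h s sg v f cp P Q.
have Fa g : g != f0 -> g = f1 by case: (fac2 g) => ->; rewrite ?eqxx.
have Fb g : g != f1 -> g = f0 by case: (fac2 g) => ->; rewrite ?eqxx.
have hr : 0 < ratr h :> R by rewrite ltr0q.
have a00 : sg v0 f0 = 0 by apply: Z; rewrite memNs /myE hs0.
have a01 : sg v0 f1 = 0 by apply: Z; rewrite memNs /myE hs1.
have a10 : sg v1 f0 = 1 by apply: O; [rewrite memNs /myE hs0 | move=> g /Fa ->; rewrite memNs /myE hs1].
have a11 : sg v1 f1 = 0 by apply: Z; rewrite memNs /myE hs1.
have a20 : sg v2 f0 = 1 by apply: O; [rewrite memNs /myE hs0 | move=> g /Fa ->; rewrite memNs /myE hs1].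
have a21 : sg v2 f1 = 0 by apply: Z; rewrite memNs /myE hs1.
have a30 : sg v3 f0 = 0 by apply: Z; rewrite memNs /myE hs0.
have a31 : sg v3 f1 = 1 by apply: O; [rewrite memNs /myE hs1 | move=> g /Fb ->; rewrite memNs /myE hs0].
have a40 : sg v4 f0 = 0 by apply: Z; rewrite memNs /myE hs0.
have a41 : sg v4 f1 = 1 by apply: O; [rewrite memNs /myE hs1 | move=> g /Fb ->; rewrite memNs /myE hs0].
rewrite !loadE a00 a01 a10 a11 a20 a21 a30 a31 a40 a41 !rmorphD !rmorph1; try rewrite !rmorphB !rmorph1.
split; ring.
Qed.

Lemma st21 (s : FPP I) (sg : cprofile R I) :
  0 < h -> client_eq s sg -> val (s f0) = 2%N -> val (s f1) = 1%N ->
  load sg f0 = ratr x + ratr h /\ load sg f1 = ratr x + 1 + ratr h.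
Proof.
move=> hp ce hs0 hs1; have cp := ce.1.
have Z := fun v g P => @zeroN R x h s sg v g cp P.
have O := fun v f P Q => @oneN R x h s sg v f cp P Q.
have Fa g : g != f0 -> g = f1 by case: (fac2 g) => ->; rewrite ?eqxx.
have Fb g : g != f1 -> g = f0 by case: (fac2 g) => ->; rewrite ?eqxx.
have hr : 0 < ratr h :> R by rewrite ltr0q.
have a00 : sg v0 f0 = 0 by apply: Z; rewrite memNs /myE hs0.
have a01 : sg v0 f1 = 1 by apply: O; [rewrite memNs /myE hs1 | move=> g /Fb ->; rewrite memNs /myE hs0].
have a20 : sg v2 f0 = 1 by apply: O; [rewrite memNs /myE hs0 | move=> g /Fa ->; rewrite memNs /myE hs1].
have a21 : sg v2 f1 = 0 by apply: Z; rewrite memNs /myE hs1.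
have a30 : sg v3 f0 = 0 by apply: Z; rewrite memNs /myE hs0.
have a31 : sg v3 f1 = 0 by apply: Z; rewrite memNs /myE hs1.
have a40 : sg v4 f0 = 0 by apply: Z; rewrite memNs /myE hs0.
have a41 : sg v4 f1 = 0 by apply: Z; rewrite memNs /myE hs1.
have a10 : sg v1 f0 = 0.
  apply: (@sharedN R x h s sg v1 f0 f1 ce).
    by move=> j; case: (fac2 j) => ->; rewrite memNs /myE ?hs0 ?hs1.
  rewrite !lmE /= a00 a01 a20 a21 a30 a31 a40 a41 !rmorphD !rmorph1 /=; try rewrite !rmorphB !rmorph1 /=.
  lra.
have a11 : sg v1 f1 = 1.
  by apply: (@complN s sg v1 f0 f1 cp) => //; rewrite memNs /myE ?hs0 ?hs1.
rewrite !loadE a00 a01 a20 a21 a30 a31 a40 a41 a10 a11 !rmorphD !rmorph1; try rewrite !rmorphB !rmorph1.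
split; ring.
Qed.

End St.

Lemma phi_facts (R : realType) :
  1 < golden_ratio R /\ golden_ratio R ^+ 2 = golden_ratio R + 1.
Proof.
rewrite /golden_ratio; set t := Num.sqrt (5 : R).
have s0 : 0 <= t by apply: sqrtr_ge0.
have s2 : t * t = 5 by rewrite -expr2 sqr_sqrtr.
split; first by nra.
have -> : ((1 + t) / 2) ^+ 2 = (1 + 2 * t + t * t) / 4 by field.
by rewrite s2; field.
Qed.

Lemma choose_params (R : realType) (al : R) :
  al < golden_ratio R ->
  exists xq hq : rat, 1 < xq /\ 0 < hq /\
    al * (1 + ratr hq) < ratr xq /\ al * ratr xq < 1 + ratr xq + 2 * ratr hq /\
    al * ratr xq < ratr xq + 1 + ratr hq /\ al * (ratr xq + ratr hq) < ratr xq + 1.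
Proof.
move=> alp; have [p1 p2] := phi_facts R; move: alp p1 p2.
set p := golden_ratio R => alp p1 p2.
have [a1 [ha1 [ha2 ha3]]] : exists a1, al <= a1 /\ 1 <= a1 /\ a1 < p.
  case: (lerP al 1) => H; [exists 1 | exists al]; split; lra.
pose b := (a1 + p) / 2.
have hb1 : a1 < b by rewrite /b; lra.
have hb2 : b < p by rewrite /b; lra.
have [xq] := rat_in_itvoo hb2; rewrite in_itv /= => /andP [bx xp].
set X := ratr xq in bx xp.
have X2 : X * X < 1 + X by nra.
pose m1 := (X - b) / b; pose m2 := (1 + X - b * X) / b.
have bm1 : b * m1 = X - b by rewrite /m1; field; lra.
have bm2 : b * m2 = 1 + X - b * X by rewrite /m2; field; lra.
have m1p : 0 < m1 by nra.
have m2p : 0 < m2 by nra.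
have mp : 0 < Num.min m1 m2 by rewrite lt_min m1p m2p.
have [hq] := rat_in_itvoo mp; rewrite in_itv /= lt_min => /andP [hp /andP [hm1 hm2]].
set H := ratr hq in hp hm1 hm2.
exists xq, hq; split; first by rewrite -(ltr_rat R) rmorph1; lra.
split; first by rewrite -(ltr0q R).
rewrite -/X -/H.
have k1 : b * H < X - b by nra.
have k2 : b * H < 1 + X - b * X by nra.
have k3 : 0 <= (b - al) * H by nra.
have k4 : 0 <= (b - al) * X by nra.
split; first by nra.
split; first by nra.
split; nra.
Qed.

Theorem mainTheorem3 (R : realType) (eps : R) :
  0 < eps ->
  exists I : fl_instance, valid_instance I /\
    ~ (exists (s : FPP I) (sg : full_cprofile R I),
         approx_SPE (golden_ratio R - eps) s sg).
Proof.
move=> ep.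
have alp : golden_ratio R - eps < golden_ratio R by lra.
have [xq [hq [x1 [h0 [c1 [c2 [c3 c4]]]]]]] := @choose_params R _ alp.
move: c1 c2 c3 c4; set al := golden_ratio R - eps => c1 c2 c3 c4.
exists (myI xq hq); split.
  split.
    move=> v; rewrite /= /myw; case: (val v) => [|[|[|[|n]]]] //; try lra.
  move=> f; apply/set0Pn; case: (fac2 f) => ->; [exists v0 | exists v1]; by rewrite inE.
case=> s [sg [fpp [fce nodev]]]; apply: nodev.
have U0 := fpp f0; have U1 := fpp f1.
rewrite inE /= in U0; rewrite inE /= in U1.
have dvE : forall f y g, val (deviate s f y g) = if g == f then val y else val (s g).
  by move=> f y g; rewrite /deviate ffunE; case: (g == f).
have dfpp : forall f y, y \in myU f -> is_FPP (deviate s f y).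
  move=> f y yU g; rewrite /deviate ffunE; case: (g == f) /eqP => [->|_] //.
have hp : 0 < hq by [].
case/orP: U0 => /eqP a; case/orP: U1 => /eqP b.
- exists f1; exists v3; first by rewrite inE.
  have [_ L1] := @st01 R xq hq _ _ hp (fce s fpp) a b.
  have [_ L2] := @st03 R xq hq _ _ hp (fce _ (dfpp f1 v3 ltac:(by rewrite inE))) ltac:(by rewrite dvE /= a) ltac:(by rewrite dvE /=).
  by rewrite L1 L2.
- exists f0; exists v2; first by rewrite inE.
  have [L1 _] := @st03 R xq hq _ _ hp (fce s fpp) a b.
  have [L2 _] := @st23 R xq hq _ _ hp (fce _ (dfpp f0 v2 ltac:(by rewrite inE))) ltac:(by rewrite dvE /=) ltac:(by rewrite dvE /= b).
  by rewrite L1 L2.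
- exists f0; exists v0; first by rewrite inE.
  have [L1 _] := @st21 R xq hq _ _ hp (fce s fpp) a b.
  have [L2 _] := @st01 R xq hq _ _ hp (fce _ (dfpp f0 v0 ltac:(by rewrite inE))) ltac:(by rewrite dvE /=) ltac:(by rewrite dvE /= b).
  by rewrite L1 L2.
- exists f1; exists v1; first by rewrite inE.
  have [_ L1] := @st23 R xq hq _ _ hp (fce s fpp) a b.
  have [_ L2] := @st21 R xq hq _ _ hp (fce _ (dfpp f1 v1 ltac:(by rewrite inE))) ltac:(by rewrite dvE /= a) ltac:(by rewrite dvE /=).
  by rewrite L1 L2.
Qed.
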